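(* Let $\Sigma\in\mathbb{R}^{N\times N}$ be a diagonal matrix with positive diagonal, $\mu\in\mathbb{R}^N$, $\gamma\in[0,1]$, and $\mathcal T$ any binary tree whose leaves are the assets $1,\dots,N$. Then the weight vector produced by the HRP-$\Sigma\mu$ algorithm is proportional to the Markowitz solution $\Sigma^{-1}\mu$.
   Context: HRP-$\Sigma\mu$ algorithm (inputs $\Sigma,\mu,\mathcal T,\gamma$), defined recursively. At a leaf (asset $i$) return $\hat w=(1)$, $v=\Sigma_{ii}$, $s=\mu_i$. At an internal node $n$ with left and right subtrees having leaf index sets $L,R$: recursively obtain $(\hat w_L,v_L,s_L)$ and $(\hat w_R,v_R,s_R)$; set $c=\hat w_L^\top\Sigma_{LR}\hat w_R$, $\Delta=v_Lv_R-\gamma^2c^2$, $\alpha_L^{\mathrm{raw}}=(v_Rs_L-\gamma cs_R)/\Delta$, $\alpha_R^{\mathrm{raw}}=(v_Ls_R-\gamma cs_L)/\Delta$, $Z=|\alpha_L^{\mathrm{raw}}|+|\alpha_R^{\mathrm{raw}}|$, $\alpha_k=\alpha_k^{\mathrm{raw}}/Z$; the node representative is the stacked vector $\hat w_n=(\alpha_L\hat w_L,\alpha_R\hat w_R)\in\mathbb{R}^{L\cup R}$, with $v_n=\hat w_n^\top\Sigma_{nn}\hat w_n$ and $s_n=\hat w_n^\top\mu_n$. The output weight vector is the representative at the root. *)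

(* Defs.v *)
From mathcomp Require Import all_boot all_order all_algebra.
Set Implicit Arguments. Unset Strict Implicit. Unset Printing Implicit Defensive.
Import Order.TTheory GRing.Theory Num.Theory.
Local Open Scope ring_scope.

Inductive btree (N : nat) : Type :=
| BLeaf of 'I_N
| BNode of btree N & btree N.

Fixpoint leaves N (t : btree N) : seq 'I_N :=
  match t with
  | BLeaf i => [:: i]
  | BNode l r => leaves l ++ leaves r
  end.

Definition tree_on_assets N (t : btree N) : Prop :=
  perm_eq (leaves t) (enum 'I_N).

Section HRP.
Variables (R : realFieldType) (N : nat).
Variables (Sigma : 'M[R]_N) (mu : 'cV[R]_N) (gamma : R).

(* Node representatives are stored as vectors of R^N extended by zero
   outside the leaf set of the node; then
   w_L^T Sigma_{LR} w_R = (wL^T Sigma wR), stacking = aL wL + aR wR, etc. *)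
Fixpoint hrp (t : btree N) : 'cV[R]_N * R * R :=
  match t with
  | BLeaf i => (\col_j (j == i)%:R, Sigma i i, mu i 0)
  | BNode l r =>
      let: (wL, vL, sL) := hrp l in
      let: (wR, vR, sR) := hrp r in
      let c := (wL^T *m Sigma *m wR) 0 0 in
      let D := vL * vR - gamma ^+ 2 * c ^+ 2 in
      let aLraw := (vR * sL - gamma * c * sR) / D in
      let aRraw := (vL * sR - gamma * c * sL) / D in
      let Z := `|aLraw| + `|aRraw| in
      let w := (aLraw / Z) *: wL + (aRraw / Z) *: wR in
      (w, (w^T *m Sigma *m w) 0 0, (w^T *m mu) 0 0)
  end.

Definition hrp_weights (t : btree N) : 'cV[R]_N := (hrp t).1.1.
End HRP.

Definition proportional (R : fieldType) N (u v : 'cV[R]_N) : Prop :=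
  exists a b : R, (a != 0 \/ b != 0) /\ a *: u = b *: v.

(* Main.v *)
Require Import Defs.
From mathcomp Require Import all_boot all_order all_algebra.
Import Order.TTheory GRing.Theory Num.Theory.
Local Open Scope ring_scope.

Lemma quad_diag (R : realFieldType) (N : nat) (S : 'M[R]_N) (u v : 'cV[R]_N) :
  is_diag_mx S -> (u^T *m S *m v) 0 0 = \sum_i u i 0 * S i i * v i 0.
Proof.
move=> /is_diag_mxP D; rewrite !mxE; apply: eq_bigr => j _.
rewrite mxE (bigD1 j) //= big1 ?addr0; first by rewrite mxE.
by move=> i nij; rewrite mxE D ?mulr0.
Qed.

Lemma lin_sum (R : realFieldType) (N : nat) (u v : 'cV[R]_N) :
  (u^T *m v) 0 0 = \sum_i u i 0 * v i 0.
Proof. by rewrite !mxE; apply: eq_bigr => j _; rewrite mxE. Qed.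

Definition xv {R : realFieldType} {N : nat} (S : 'M[R]_N) (mu : 'cV[R]_N)
  (t : btree N) : 'cV[R]_N :=
  \col_j ((j \in leaves t)%:R * (mu j 0 / S j j)).

From mathcomp Require Import ring.

Lemma kv (R : realFieldType) (N : nat) (S : 'M[R]_N) (mu : 'cV[R]_N) t k :
  is_diag_mx S -> (forall i, 0 < S i i) ->
  ((k *: xv S mu t)^T *m S *m (k *: xv S mu t)) 0 0 =
  k * ((k *: xv S mu t)^T *m mu) 0 0.
Proof.
move=> D Sp; rewrite quad_diag // lin_sum mulr_sumr; apply: eq_bigr => i _.
have Si : S i i != 0 by rewrite gt_eqF.
rewrite !mxE; case: (i \in leaves t) => /=; last by rewrite !(mulr0, mul0r).
by field.
Qed.

Lemma xv0_lin (R : realFieldType) (N : nat) (S : 'M[R]_N) (mu : 'cV[R]_N) t (w : 'cV[R]_N) :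
  (forall i, 0 < S i i) -> xv S mu t = 0 ->
  (forall j, j \notin leaves t -> w j 0 = 0) -> (w^T *m mu) 0 0 = 0.
Proof.
move=> Sp x0 sw; rewrite lin_sum big1 // => i _.
case: (boolP (i \in leaves t)) => it; last by rewrite sw ?mul0r.
have := congr1 (fun m : 'cV_N => m i 0) x0; rewrite !mxE it mul1r => /eqP.
rewrite mulf_eq0 invr_eq0 (gt_eqF (Sp i)) orbF => /eqP ->; by rewrite mulr0.
Qed.

Lemma xv_node (R : realFieldType) (N : nat) (S : 'M[R]_N) (mu : 'cV[R]_N) l r :
  ~~ has (mem (leaves l)) (leaves r) ->
  xv S mu (BNode l r) = xv S mu l + xv S mu r.
Proof.
move=> /hasPn dis; apply/matrixP => i j; rewrite !mxE /= mem_cat.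
case: (boolP (i \in leaves r)) => ir /=.
  by move: (dis _ ir); rewrite /= => /negbTE ->; rewrite mul1r mul0r add0r.
by rewrite orbF !mul0r addr0.
Qed.
Lemma inv (R : realFieldType) (N : nat) (S : 'M[R]_N) (mu : 'cV[R]_N) (g : R) (t : btree N) :
  is_diag_mx S -> (forall i, 0 < S i i) -> uniq (leaves t) ->
  exists w, hrp S mu g t = (w, (w^T *m S *m w) 0 0, (w^T *m mu) 0 0) /\
    (forall j, j \notin leaves t -> w j 0 = 0) /\
    ((exists k, w = k *: xv S mu t) \/ xv S mu t = 0).
Proof.
move=> D Sp; elim: t => [i|l IHl r IHr] /=.
  move=> _; exists (\col_j (j == i)%:R); split.
    congr (_, _, _).
      rewrite quad_diag // (bigD1 i) //= big1 ?addr0; first by rewrite !mxE eqxx !mulr1 mul1r.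
      by move=> j /negbTE ji; rewrite !mxE ji !mul0r.
    rewrite lin_sum (bigD1 i) //= big1 ?addr0; first by rewrite !mxE eqxx mul1r.
    by move=> j /negbTE ji; rewrite !mxE ji !mul0r.
  split.
    by move=> j; rewrite inE => /negbTE ji; rewrite mxE ji.
  have Si : S i i != 0 by rewrite gt_eqF.
  case: (eqVneq (mu i 0) 0) => m0.
    right; apply/matrixP => j k; rewrite !mxE inE.
    case: (eqVneq j i) => [->|]; first by rewrite m0 mul0r mulr0.
    by rewrite mul0r.
  left; exists (S i i / mu i 0); apply/matrixP => j k; rewrite !mxE inE.
  case: (eqVneq j i) => [->|]; last by rewrite !(mul0r, mulr0).
  change (1 = S i i / mu i 0 * (1 * (mu i 0 / S i i))); by field; rewrite Si m0.
rewrite cat_uniq => /and3P[ul dis ur].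
have [wL [eL [sL hL]]] := IHl ul.
have [wR [eR [sR hR]]] := IHr ur.
have c0 : (wL^T *m S *m wR) 0 0 = 0.
  rewrite quad_diag // big1 // => i _.
  case: (boolP (i \in leaves r)) => ir; last by rewrite sR ?mulr0.
  rewrite sL ?mul0r //; move/hasPn: dis => /(_ _ ir); by [].
rewrite eL eR.
eexists; split; first reflexivity.
rewrite c0 xv_node //.
set vL := (wL^T *m S *m wL) 0 0.
set vR := (wR^T *m S *m wR) 0 0.
set tL := (wL^T *m mu) 0 0.
set tR := (wR^T *m mu) 0 0.
set Z := `|_| + `|_|.
split.
  move=> j; rewrite mem_cat negb_or => /andP[jl jr].
  by rewrite !mxE sL // sR // !mulr0 addr0.
case: hL => [[kL eKL]|xL0]; case: hR => [[kR eKR]|xR0].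
- have hvL : vL = kL * tL by rewrite /vL /tL eKL kv.
  have hvR : vR = kR * tR by rewrite /vR /tR eKR kv.
  left; exists ((vR * tL - g * 0 * tR) / (vL * vR - g ^+ 2 * 0 ^+ 2) / Z * kL).
  rewrite eKL eKR !scalerA scalerDr; congr (_ *: _ + _ *: _).
  rewrite hvL hvR; ring.
- have tR0 : tR = 0 by exact: (xv0_lin _ _ _ _ _ _ Sp xR0 sR).
  left; exists ((vR * tL - g * 0 * tR) / (vL * vR - g ^+ 2 * 0 ^+ 2) / Z * kL).
  rewrite eKL xR0 tR0 addr0 !scalerA.
  by rewrite !(mul0r, mulr0, subr0, scale0r, addr0).
- have tL0 : tL = 0 by exact: (xv0_lin _ _ _ _ _ _ Sp xL0 sL).
  left; exists ((vL * tR - g * 0 * tL) / (vL * vR - g ^+ 2 * 0 ^+ 2) / Z * kR).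
  rewrite eKR xL0 tL0 add0r !scalerA.
  by rewrite !(oppr0, mul0r, mulr0, subr0, scale0r, add0r).
- by right; rewrite xL0 xR0 addr0.
Qed.

Theorem mainTheorem15 (R : realFieldType) (N : nat)
    (Sigma : 'M[R]_N) (mu : 'cV[R]_N) (gamma : R) (t : btree N) :
  is_diag_mx Sigma ->
  (forall i : 'I_N, 0 < Sigma i i) ->
  0 <= gamma <= 1 ->
  tree_on_assets t ->
  proportional (hrp_weights Sigma mu gamma t) (invmx Sigma *m mu).
Proof.
move=> D Sp _ ta.
have ut : uniq (leaves t) by rewrite (perm_uniq ta) enum_uniq.
have [w [e [_ h]]] := inv _ _ Sigma mu gamma t D Sp ut.
have xall : xv Sigma mu t = \col_j (mu j 0 / Sigma j j).
  by apply/matrixP => i j; rewrite !mxE (perm_mem ta) mem_enum mul1r.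
have key : invmx Sigma *m mu = xv Sigma mu t.
  have hm : mu = Sigma *m xv Sigma mu t.
    apply/matrixP => i j; rewrite xall mxE (bigD1 i) //= big1 ?addr0.
      rewrite mxE (ord1 j); by field; rewrite gt_eqF.
    move=> k ki; rewrite (is_diag_mxP D i k) ?mul0r //; by rewrite eq_sym.
  rewrite {1}hm mulKmx // unitmxE unitfE.
  have -> : Sigma = diag_mx (\row_i Sigma i i).
    apply/matrixP => i j; rewrite !mxE; case: (eqVneq i j) => [->|ij].
      by rewrite mulr1n.
    by move/is_diag_mxP: D => ->; rewrite ?mulr0n.
  rewrite det_diag; apply/prodf_neq0 => i _; by rewrite mxE gt_eqF.
rewrite /hrp_weights e /= key; case: h => [[k ->]|->].
  by exists 1, k; split; [left; exact: oner_neq0 | rewrite scale1r].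
by exists 0, 1; split; [right; exact: oner_neq0 | rewrite scale0r scaler0].
Qed.
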